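(* Let $G$ be a ribbon graph and $e\in E(G)$. Then (1) $P_{\langle\delta\rangle}(G,x)=P_{\langle\delta\rangle}(G\setminus e,x)+P_{\langle\delta\rangle}(G/e,x)$; (2) $P_{\langle\tau\delta\tau\rangle}(G,x)=P_{\langle\tau\delta\tau\rangle}(G\setminus e,x)+P_{\langle\tau\delta\tau\rangle}(G^{\tau(e)}/e,x)$; (3) $P_{\langle\delta\tau\rangle}(G,x)=P_{\langle\delta\tau\rangle}(G\setminus e,x)+P_{\langle\delta\tau\rangle}(G/e,x)+P_{\langle\delta\tau\rangle}(G^{\tau(e)}/e,x)$; (4) $P_{\langle\delta,\tau\rangle}(G,x)=2\big[P_{\langle\delta,\tau\rangle}(G\setminus e,x)+P_{\langle\delta,\tau\rangle}(G/e,x)+P_{\langle\delta,\tau\rangle}(G^{\tau(e)}/e,x)\big]$.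
   Context: A ribbon graph $G=(V(G),E(G))$ is a (orientable or non-orientable) surface with boundary, represented as the union of a set $V(G)$ of vertex discs and a set $E(G)$ of edge discs (ribbons) such that vertices and edges intersect in disjoint line segments, each such segment lies on the boundary of exactly one vertex and exactly one edge, and every edge contains exactly two such segments. $v(G)$, $e(G)$ denote the numbers of vertices and edges. For $A\subseteq E(G)$, $G\setminus A$ is obtained by deleting the edges in $A$ while keeping all vertices. The partial dual $G^{\delta(A)}$ is obtained by gluing a disc along each boundary component of the spanning ribbon subgraph $(V(G),A)$ (these discs become the vertex discs), removing the interiors of the original vertex discs, and keeping the edge ribbons. The partial Petrial $G^{\tau(A)}$ adds a half-twist to each edge in $A$. Contraction: $G/e=G^{\delta(e)}\setminus e$. For a word $w=w_1\cdots w_n$ over $\{\delta,\tau\}$, $G^{w(A)}=(\cdots(G^{w_n(A)})^{w_{n-1}(A)}\cdots)^{w_1(A)}$ (rightmost letter applied first), $G^{1(A)}=G$, and $G^{\xi(A)\pi(B)}=(G^{\xi(A)})^{\pi(B)}$. Vertex polynomials (sums over ordered partitions of $E(G)$ into pairwise disjoint, possibly empty parts): $P_{\langle\delta\rangle}(G,x)=\sum_{A\subseteq E(G)}x^{v(G^{\delta(A)})}$; $P_{\langle\tau\delta\tau\rangle}(G,x)=\sum_{A\subseteq E(G)}x^{v(G^{\tau\delta\tau(A)})}$; $P_{\langle\delta\tau\rangle}(G,x)=\sum_{(A_1,A_2,A_3)}x^{v(G^{1(A_1)\tau\delta(A_2)\delta\tau(A_3)})}$; $P_{\langle\delta,\tau\rangle}(G,x)=\sum_{(A_1,\dots,A_6)}x^{v(G^{1(A_1)\delta(A_2)\tau(A_3)\tau\delta(A_4)\delta\tau(A_5)\tau\delta\tau(A_6)})}$.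 *)

(* Defs.v *)
From mathcomp Require Import all_boot all_algebra.
Set Implicit Arguments. Unset Strict Implicit. Unset Printing Implicit Defensive.
Import GRing.Theory.
Local Open Scope ring_scope.

(* Each edge ribbon is a rectangle with four corners, indexed by bool * bool.
   The three fixed-point-free involutions of the corners: *)
Inductive pairing := PA | PB | PC.

Definition act (p : pairing) (c : bool * bool) : bool * bool :=
  match p with
  | PA => (~~ c.1, c.2)
  | PB => (c.1, ~~ c.2)
  | PC => (~~ c.1, ~~ c.2)
  end.

Definition third (p q : pairing) : pairing :=
  match p, q with
  | PA, PB | PB, PA => PC
  | PA, PC | PC, PA => PB
  | PB, PC | PC, PB => PA
  | _, _ => p
  end.

Definition flag (E : finType) := (E * (bool * bool))%type.

(* A ribbon graph whose edges are labelled by a subset of the finite type E.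
   - rg_edges : the edge set E(G);
   - rg_iso   : number of vertices with no edge-segment attached at all;
   - rg_arc   : pairs corners joined by an arc of a vertex boundary
                (between consecutive attaching segments);
   - rg_seg e : pairs the two corners of each attaching segment of e;
   - rg_side e: pairs the corners joined by a free side of the ribbon e.
   Labels e not in rg_edges are "ghost" edges: their (former) attaching
   segments are merely parts of vertex boundaries (this is how deletion
   keeps all vertices and joins the boundary arcs). *)
Record ribgraph (E : finType) := RGraph {
  rg_edges : {set E};
  rg_iso : nat;
  rg_arc : flag E -> flag E;
  rg_seg : E -> pairing;
  rg_side : E -> pairing }.

Definition is_ribbon_graph (E : finType) (G : ribgraph E) : Prop :=
  involutive (rg_arc G) /\ (forall x, rg_arc G x <> x) /\
  (forall e, rg_seg G e <> rg_side G e).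

(* vertex boundaries = orbits of <arc, seg> on flags *)
Definition vrel (E : finType) (G : ribgraph E) : rel (flag E) :=
  fun x y => (y == rg_arc G x) || (y == (x.1, act (rg_seg G x.1) x.2)).

Definition nverts (E : finType) (G : ribgraph E) : nat :=
  rg_iso G + n_comp (vrel G) predT.

Definition pdual (E : finType) (A : {set E}) (G : ribgraph E) : ribgraph E :=
  RGraph (rg_edges G) (rg_iso G) (rg_arc G)
    (fun e => if e \in A then rg_side G e else rg_seg G e)
    (fun e => if e \in A then rg_seg G e else rg_side G e).

Definition ppetrial (E : finType) (A : {set E}) (G : ribgraph E) : ribgraph E :=
  RGraph (rg_edges G) (rg_iso G) (rg_arc G) (rg_seg G)
    (fun e => if e \in A then third (rg_seg G e) (rg_side G e) else rg_side G e).

Definition rdelete (E : finType) (e : E) (G : ribgraph E) : ribgraph E :=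
  RGraph (rg_edges G :\ e) (rg_iso G) (rg_arc G) (rg_seg G) (rg_side G).

Definition rcontract (E : finType) (e : E) (G : ribgraph E) : ribgraph E :=
  rdelete e (pdual [set e] G).

Inductive rop := Dl | Tau.
Definition word := seq rop.

Definition apply_op (E : finType) (o : rop) (A : {set E}) (G : ribgraph E) :=
  match o with Dl => pdual A G | Tau => ppetrial A G end.

(* G^{w(A)} for w = w_1 ... w_n : rightmost letter applied first *)
Definition apply_word (E : finType) (w : word) (A : {set E}) (G : ribgraph E) :=
  foldr (fun o H => apply_op o A H) G w.

(* G^{xi_1(A_1) xi_2(A_2) ...} = (...(G^{xi_1(A_1)})^{xi_2(A_2)}...) *)
Definition apply_seq (E : finType) (G : ribgraph E) (s : seq (word * {set E})) :=
  foldl (fun H p => apply_word p.1 p.2 H) G s.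

(* sum over ordered partitions (A_1,...,A_n) of E(G) (parts possibly empty),
   encoded by the map sending each edge to the index of its part *)
Definition part_poly (E : finType) (ws : seq word) (G : ribgraph E) : {poly int} :=
  \sum_(f : {ffun E -> 'I_(size ws)} |
          [forall e, (e \notin rg_edges G) ==> (val (f e) == 0%N)])
    'X^(nverts (apply_seq G
           [seq (nth [::] ws i, [set e in rg_edges G | val (f e) == i]) | i <- iota 0 (size ws)])).

Definition P_d (E : finType) (G : ribgraph E) : {poly int} :=
  \sum_(A : {set E} | A \subset rg_edges G) 'X^(nverts (pdual A G)).

Definition P_tdt (E : finType) (G : ribgraph E) : {poly int} :=
  \sum_(A : {set E} | A \subset rg_edges G)
     'X^(nverts (apply_word [:: Tau; Dl; Tau] A G)).

Definition P_dt (E : finType) (G : ribgraph E) : {poly int} :=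
  part_poly [:: [::]; [:: Tau; Dl]; [:: Dl; Tau]] G.

Definition P_d_t (E : finType) (G : ribgraph E) : {poly int} :=
  part_poly [:: [::]; [:: Dl]; [:: Tau]; [:: Tau; Dl]; [:: Dl; Tau];
                [:: Tau; Dl; Tau]] G.

(* Main.v *)
Require Import Defs.
From mathcomp Require Import all_boot all_algebra.
From mathcomp Require Import ring zify.
Set Implicit Arguments. Unset Strict Implicit. Unset Printing Implicit Defensive.
Import GRing.Theory.
Local Open Scope ring_scope.

Section S.
Variable E : finType.
Implicit Types (G H : ribgraph E) (A : {set E}).

Definition st G x := (rg_seg G x, rg_side G x).
Definition opst (o : rop) (p : pairing * pairing) :=
  match o with Dl => (p.2, p.1) | Tau => (p.1, third p.1 p.2) end.
Definition wst (w : word) p := foldr opst p w.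

Lemma nverts_ext G H : rg_iso G = rg_iso H -> rg_arc G =1 rg_arc H ->
  rg_seg G =1 rg_seg H -> nverts G = nverts H.
Proof.
move=> hi ha hs.
have ec : connect (vrel G) =2 connect (vrel H).
  by apply: eq_connect => x y; rewrite /vrel ha hs.
rewrite /nverts (eq_n_comp ec).
exact: (congr1 (fun n => n + n_comp (vrel H) predT)%N hi).
Qed.

Lemma word_pres w A G : [/\ rg_edges (apply_word w A G) = rg_edges G,
  rg_iso (apply_word w A G) = rg_iso G & rg_arc (apply_word w A G) = rg_arc G].
Proof. by elim: w => [|[] w [h1 h2 h3]] //=. Qed.

Lemma st_word w A G x :
  st (apply_word w A G) x = if x \in A then wst w (st G x) else st G x.
Proof.
elim: w => [|o w IH] /=; first by case: (x \in A).
have h1 : rg_seg (apply_word w A G) x = (st (apply_word w A G) x).1 by [].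
have h2 : rg_side (apply_word w A G) x = (st (apply_word w A G) x).2 by [].
by case: o; rewrite /st /= h1 h2 IH; case: (x \in A).
Qed.

Lemma seq_pres s G : [/\ rg_edges (apply_seq G s) = rg_edges G,
  rg_iso (apply_seq G s) = rg_iso G & rg_arc (apply_seq G s) = rg_arc G].
Proof.
elim: s G => [|q s IH] G //=.
have [h1 h2 h3] := IH (apply_word q.1 q.2 G).
have [k1 k2 k3] := word_pres q.1 q.2 G.
by rewrite h1 h2 h3 k1 k2 k3.
Qed.

Lemma seq_iso s G : rg_iso (apply_seq G s) = rg_iso G.
Proof. by have [] := seq_pres s G. Qed.
Lemma seq_arc s G : rg_arc (apply_seq G s) = rg_arc G.
Proof. by have [] := seq_pres s G. Qed.

Lemma st_seq s G x : st (apply_seq G s) x =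
  foldl (fun p (q : word * {set E}) => if x \in q.2 then wst q.1 p else p) (st G x) s.
Proof.
elim: s G => [|q s IH] G //=.
by rewrite IH st_word.
Qed.

Lemma fold_iota (ws : seq word) G (f : {ffun E -> 'I_(size ws)}) x m k p0 :
  foldl (fun p (q : word * {set E}) => if x \in q.2 then wst q.1 p else p) p0
   [seq (nth [::] ws i, [set e in rg_edges G | val (f e) == i]) | i <- iota m k]
  = if (x \in rg_edges G) && (m <= f x < m + k)%N then wst (nth [::] ws (f x)) p0 else p0.
Proof.
elim: k m p0 => [|k IH] m p0 /=.
  rewrite addn0; case: (x \in _) => //=.
  by have -> : (m <= f x < m)%N = false by lia.
rewrite IH inE.
case hx: (x \in rg_edges G) => //=.
case: (eqVneq (nat_of_ord (f x)) m) => [hm|/eqP hm] /=.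
  have -> : (m.+1 <= f x < m.+1 + k)%N = false by lia.
  have -> : (m <= f x < m + k.+1)%N = true by lia.
  by rewrite -hm.
by have -> : (m.+1 <= f x < m.+1 + k)%N = (m <= f x < m + k.+1)%N by lia.
Qed.

Lemma seg_seq (ws : seq word) G (f : {ffun E -> 'I_(size ws)}) x :
  rg_seg (apply_seq G [seq (nth [::] ws i, [set e in rg_edges G | val (f e) == i])
                      | i <- iota 0 (size ws)]) x =
  (if x \in rg_edges G then wst (nth [::] ws (f x)) (st G x) else st G x).1.
Proof.
have -> : rg_seg (apply_seq G [seq (nth [::] ws i, [set e in rg_edges G | val (f e) == i])
                      | i <- iota 0 (size ws)]) x =
  (st (apply_seq G [seq (nth [::] ws i, [set e in rg_edges G | val (f e) == i])
                      | i <- iota 0 (size ws)]) x).1 by [].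
rewrite st_seq fold_iota add0n leq0n ltn_ord andbT /=.
by case: (x \in _).
Qed.

Definition setf n (e : E) (k : 'I_n) (f : {ffun E -> 'I_n}) : {ffun E -> 'I_n} :=
  [ffun x => if x == e then k else f x].
Lemma setfE n e k f x : @setf n e k f x = if x == e then k else f x.
Proof. by rewrite /setf ffunE. Qed.

Lemma part_split (ws : seq word) G H e (k : 'I_(size ws)) :
  e \in rg_edges G ->
  rg_edges H = rg_edges G :\ e -> rg_iso H = rg_iso G -> rg_arc H = rg_arc G ->
  (forall x, x != e -> st H x = st G x) ->
  rg_seg H e = (wst (nth [::] ws k) (st G e)).1 ->
  \sum_(f : {ffun E -> 'I_(size ws)} |
          [forall x, (x \notin rg_edges G) ==> (val (f x) == 0%N)] && (f e == k))
    'X^(nverts (apply_seq G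
           [seq (nth [::] ws i, [set x in rg_edges G | val (f x) == i]) | i <- iota 0 (size ws)]))
  = part_poly ws H.
Proof.
move=> eG hE hI hA hS hs.
pose z : 'I_(size ws) := Ordinal (leq_ltn_trans (leq0n k) (ltn_ord k)).
rewrite (reindex_onto (setf e k) (setf e z)); last first.
  move=> f /andP[_ /eqP fe]; apply/ffunP => x; rewrite !setfE.
  by case: eqP => // ->.
rewrite /part_poly; apply: eq_big => f.
  rewrite setfE eqxx. have -> : (k == k) = true by apply/eqP. rewrite andbT hE.
  apply/idP/idP.
    move=> /andP[/forallP Hf /eqP Hh]; apply/forallP => x; apply/implyP.
    rewrite !inE negb_and negbK.
    case: (eqVneq x e) => [->|xe] /= hx.
      by rewrite -Hh setfE eqxx.
    by have := Hf x; rewrite setfE (negbTE xe) hx.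
  move=> /forallP Hf; apply/andP; split.
    apply/forallP => x; apply/implyP => hx; rewrite setfE.
    have xe : x != e by apply: contraNneq hx => ->.
    by rewrite (negbTE xe); have := Hf x; rewrite !inE negb_and hx orbT.
  apply/eqP/ffunP => x; rewrite !setfE; case: (eqVneq x e) => [->|xe] //.
  apply: val_inj => /=; have := Hf e; rewrite !inE eqxx /= => /eqP ->.
  by [].
move=> Pf; apply: (congr1 (fun n => 'X^n)).
apply: nverts_ext.
- by rewrite !seq_iso hI.
- by rewrite !seq_arc hA.
move=> x; rewrite !seg_seq hE !inE setfE.
case: (eqVneq x e) => [->|xe] /=; first by rewrite eG hs.
have := hS x xe; rewrite /st => -[-> ->].
by case: (x \in rg_edges G).
Qed.

Notation PS ws G e k := (\sum_(f : {ffun E -> 'I_(size ws)} |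
          [forall x, (x \notin rg_edges G) ==> (val (f x) == 0%N)] && (f e == k))
    'X^(nverts (apply_seq G
           [seq (nth [::] ws i, [set x in rg_edges G | val (f x) == i]) | i <- iota 0 (size ws)]))).

Lemma ps_del ws G e (k : 'I_(size ws)) : e \in rg_edges G ->
  (wst (nth [::] ws k) (st G e)).1 = rg_seg G e -> PS ws G e k = part_poly ws (rdelete e G).
Proof. by move=> eG h; apply: part_split. Qed.

Lemma ps_con ws G e (k : 'I_(size ws)) : e \in rg_edges G ->
  (wst (nth [::] ws k) (st G e)).1 = rg_side G e -> PS ws G e k = part_poly ws (rcontract e G).
Proof.
move=> eG h; apply: part_split => //=; last by rewrite inE eqxx.
by move=> x xe; rewrite /st /= inE (negbTE xe).
Qed.

Lemma ps_conp ws G e (k : 'I_(size ws)) : e \in rg_edges G ->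
  (wst (nth [::] ws k) (st G e)).1 = third (rg_seg G e) (rg_side G e) ->
  PS ws G e k = part_poly ws (rcontract e (ppetrial [set e] G)).
Proof.
move=> eG h; apply: part_split => //=; last by rewrite !inE eqxx.
by move=> x xe; rewrite /st /= !inE (negbTE xe).
Qed.

Lemma part_total n (P : pred {ffun E -> 'I_n}) (F : {ffun E -> 'I_n} -> {poly int}) e :
  \sum_(f | P f) F f = \sum_(k < n) \sum_(f | P f && (f e == k)) F f.
Proof. by rewrite (partition_big (fun f : {ffun E -> 'I_n} => f e) xpredT). Qed.

Lemma set_split G e (F : {set E} -> {poly int}) : e \in rg_edges G ->
  \sum_(A : {set E} | A \subset rg_edges G) F A =
  \sum_(A : {set E} | A \subset rg_edges G :\ e) F A + \sum_(A : {set E} | A \subset rg_edges G :\ e) F (e |: A).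
Proof.
move=> eG; rewrite (bigID (fun A : {set E} => e \in A)) /= addrC; congr (_ + _).
  by apply: eq_bigl => A; rewrite subsetD1.
rewrite (reindex_onto (fun A : {set E} => e |: A) (fun A : {set E} => A :\ e)); last first.
  by move=> A /andP[_ ]; apply: setD1K.
apply: eq_bigl => A; rewrite subsetD1 subUset sub1set eG setU11 /= andbT.
case ej: (e \in A) => /=; last by rewrite setU1K ?ej // eqxx andbT.
rewrite andbF; apply/negbTE; rewrite negb_and; apply/orP; right; apply/eqP => h; move: ej; rewrite -h !inE eqxx //.
Qed.
End S.

Lemma aux6 (a b c : {poly int}) :
  a + (b + (a + (b + (c + (c + 0))))) = 2%:R * (a + b + c).
Proof. ring. Qed.

Unset Implicit Arguments.
Set Strict Implicit.

Theorem mainTheorem4 (E : finType) (G : ribgraph E) (e : E) :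
  is_ribbon_graph G -> e \in rg_edges G ->
  [/\ P_d G = P_d (rdelete e G) + P_d (rcontract e G),
      P_tdt G = P_tdt (rdelete e G) + P_tdt (rcontract e (ppetrial [set e] G)),
      P_dt G = P_dt (rdelete e G) + P_dt (rcontract e G)
               + P_dt (rcontract e (ppetrial [set e] G))
    & P_d_t G = 2%:R * (P_d_t (rdelete e G) + P_d_t (rcontract e G)
                        + P_d_t (rcontract e (ppetrial [set e] G)))].
Proof.
move=> _ eG; split.
- rewrite /P_d [LHS](set_split _ eG); apply: f_equal2.
    apply: eq_bigr => A _; apply: (congr1 (fun n => 'X^n)).
    by apply: nverts_ext.
  apply: eq_bigr => A; rewrite subsetD1 => /andP[_ eA].
  apply: (congr1 (fun n => 'X^n)).
  apply: nverts_ext => // x /=; rewrite !inE.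
  by case: (eqVneq x e) => [->|xe] //=; rewrite (negbTE eA).
- rewrite /P_tdt [LHS](set_split _ eG); apply: f_equal2.
    apply: eq_bigr => A _; apply: (congr1 (fun n => 'X^n)).
    by apply: nverts_ext.
  apply: eq_bigr => A; rewrite subsetD1 => /andP[_ eA].
  apply: (congr1 (fun n => 'X^n)).
  apply: nverts_ext => // x /=; rewrite !inE.
  by case: (eqVneq x e) => [->|xe] //=; rewrite ?(negbTE eA) ?(negbTE xe) ?orbF.
- rewrite /P_dt -(ps_del (ws := [:: [::]; [:: Tau; Dl]; [:: Dl; Tau]]) (k := ord0) eG) // -(ps_con (ws := [:: [::]; [:: Tau; Dl]; [:: Dl; Tau]]) (k := lift ord0 ord0) eG) //.
  rewrite -(ps_conp (ws := [:: [::]; [:: Tau; Dl]; [:: Dl; Tau]]) (k := lift ord0 (lift ord0 ord0)) eG) //.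
  rewrite /part_poly [LHS](part_total _ _ e).
  rewrite [in LHS]big_ord_recl [in LHS]big_ord_recl [in LHS]big_ord_recl [in LHS]big_ord0.
  by rewrite addr0 !addrA.
rewrite /P_d_t {1}/part_poly [LHS](part_total _ _ e).
rewrite [in LHS]big_ord_recl [in LHS]big_ord_recl [in LHS]big_ord_recl.
rewrite [in LHS]big_ord_recl [in LHS]big_ord_recl [in LHS]big_ord_recl [in LHS]big_ord0.
rewrite (ps_del (ws := [:: [::]; [:: Dl]; [:: Tau]; [:: Tau; Dl]; [:: Dl; Tau]; [:: Tau; Dl; Tau]]) (k := ord0) eG) //.
rewrite (ps_con (ws := [:: [::]; [:: Dl]; [:: Tau]; [:: Tau; Dl]; [:: Dl; Tau]; [:: Tau; Dl; Tau]]) (k := lift ord0 ord0) eG) //.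
rewrite (ps_del (ws := [:: [::]; [:: Dl]; [:: Tau]; [:: Tau; Dl]; [:: Dl; Tau]; [:: Tau; Dl; Tau]]) (k := lift ord0 (lift ord0 ord0)) eG) //.
rewrite (ps_con (ws := [:: [::]; [:: Dl]; [:: Tau]; [:: Tau; Dl]; [:: Dl; Tau]; [:: Tau; Dl; Tau]]) (k := lift ord0 (lift ord0 (lift ord0 ord0))) eG) //.
rewrite (ps_conp (ws := [:: [::]; [:: Dl]; [:: Tau]; [:: Tau; Dl]; [:: Dl; Tau]; [:: Tau; Dl; Tau]]) (k := lift ord0 (lift ord0 (lift ord0 (lift ord0 ord0)))) eG) //.
rewrite (ps_conp (ws := [:: [::]; [:: Dl]; [:: Tau]; [:: Tau; Dl]; [:: Dl; Tau]; [:: Tau; Dl; Tau]]) (k := lift ord0 (lift ord0 (lift ord0 (lift ord0 (lift ord0 ord0))))) eG) //.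
exact: aux6.
Qed.
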